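(* Let $N,M$ be positive integers, let $\mathscr{A}\subset\mathscr{M}(N,M)$ and $\mathscr{B}\subset\mathscr{M}(M,N)$ be finite sets of real matrices, and let $\|\cdot\|$ be a submultiplicative norm on $\mathscr{M}(N,N)$. Suppose that for every sequence $\{A_n\}_{n\ge1}$ with $A_n\in\mathscr{A}$ there exists a sequence $\{B_n\}_{n\ge1}$ with $B_n\in\mathscr{B}$ such that $\|A_nB_n\cdots A_1B_1\|\to0$ as $n\to\infty$. Then there exist a positive integer $k_*$ and a constant $\mu\in(0,1)$ such that for every sequence $\{A_n\in\mathscr{A}\}$ there exist a positive integer $k\le k_*$ and matrices $B_1,\ldots,B_k\in\mathscr{B}$ with $\|A_kB_k\cdots A_1B_1\|\le\mu$.
   Context: $\mathscr{M}(p,q)$ denotes the space of $p\times q$ real matrices with the topology of elementwise convergence. A norm on $\mathscr{M}(N,N)$ is submultiplicative if $\|XY\|\le\|X\|\,\|Y\|$ for all $X,Y$. *)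

(* Defs.v *)
From HB Require Import structures.
From mathcomp Require Import all_boot all_order all_algebra.
From mathcomp Require Import all_classical all_reals all_analysis.
Set Implicit Arguments. Unset Strict Implicit. Unset Printing Implicit Defensive.
Import Order.TTheory GRing.Theory Num.Theory.
Local Open Scope ring_scope.

Definition submult_norm (R : realType) (N : nat) (nrm : 'M[R]_N -> R) : Prop :=
  [/\ (forall X, nrm X = 0 -> X = 0),
      (forall (c : R) X, nrm (c *: X) = `|c| * nrm X),
      (forall X Y, nrm (X + Y) <= nrm X + nrm Y) &
      (forall X Y, nrm (X *m Y) <= nrm X * nrm Y)].

(* prodAB a b n = A_n B_n A_{n-1} B_{n-1} ... A_1 B_1 (sequences indexed from 1;
   the value at index 0 is unused); prodAB a b 0 = identity. *)
Fixpoint prodAB (R : realType) (N M : nat)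
  (a : nat -> 'M[R]_(N, M)) (b : nat -> 'M[R]_(M, N)) (n : nat) : 'M[R]_N :=
  match n with
  | 0 => 1%:M
  | n'.+1 => (a n'.+1 *m b n'.+1) *m prodAB a b n'
  end.

(* Main.v *)
Require Import Defs.
From HB Require Import structures.
From mathcomp Require Import all_boot all_order all_algebra.
From mathcomp Require Import all_classical all_reals all_analysis.
From mathcomp Require Import zify lra.
Import Order.TTheory GRing.Theory Num.Theory.
Import numFieldNormedType.Exports.
Local Open Scope classical_set_scope.
Local Open Scope ring_scope.

Lemma prodAB_agree (R : realType) (N M : nat) (a a' : nat -> 'M[R]_(N, M))
  (b : nat -> 'M[R]_(M, N)) (j : nat) :
  (forall i, (0 < i <= j)%N -> a i = a' i) -> prodAB a b j = prodAB a' b j.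
Proof.
elim: j => [//|j IH] H /=.
rewrite H; last by rewrite ltn0Sn leqnn.
rewrite IH // => i /andP[i0 ij]; apply: H; rewrite i0 /=; exact: leqW.
Qed.

Lemma seq_bound (T : eqType) (s : seq T) (Q : T -> nat -> Prop) :
  (forall x, x \in s -> exists m, Q x m) ->
  exists K, forall x, x \in s -> exists m, (m <= K)%N /\ Q x m.
Proof.
elim: s => [|y s IH] H; first by exists 0%N => x; rewrite in_nil.
have [K HK] : exists K, forall x, x \in s -> exists m, (m <= K)%N /\ Q x m.
  by apply: IH => x xs; apply: H; rewrite in_cons xs orbT.
have [my Hy] := H y (mem_head y s).
exists (maxn K my) => x; rewrite in_cons => /orP[/eqP->|xs].
  by exists my; split; [exact: leq_maxr|].
have [m [mK Qm]] := HK x xs.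
by exists m; split; [exact: leq_trans mK (leq_maxl _ _)|].
Qed.

Definition updf {T : Type} (w : nat -> T) (n : nat) (x : T) : nat -> T :=
  fun i => if i == n then x else w i.

Fixpoint build {T : Type} (x0 : T) (g : nat * (nat -> T) -> T) (n : nat) : nat -> T :=
  match n with 0 => fun _ => x0 | n'.+1 => updf (build x0 g n') n'.+1 (g (n', build x0 g n')) end.


Lemma buildS (T : Type) (x0 : T) g n :
  build x0 g n.+1 = updf (build x0 g n) n.+1 (g (n, build x0 g n)).
Proof. by []. Qed.

Lemma updf_eq (T : Type) (w : nat -> T) n x : updf w n x n = x.
Proof. by rewrite /updf eqxx. Qed.

Lemma updf_neq (T : Type) (w : nat -> T) n x i : i != n -> updf w n x i = w i.
Proof. by rewrite /updf => /negbTE ->. Qed.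

Theorem lemma1 (R : realType) (N M : nat) (hN : (0 < N)%N) (hM : (0 < M)%N)
  (As : seq 'M[R]_(N, M)) (Bs : seq 'M[R]_(M, N)) (nrm : 'M[R]_N -> R)
  (hnrm : submult_norm nrm)
  (hyp : forall a : nat -> 'M[R]_(N, M), (forall n, (0 < n)%N -> a n \in As) ->
     exists b : nat -> 'M[R]_(M, N), (forall n, (0 < n)%N -> b n \in Bs) /\
       (fun n => nrm (prodAB a b n)) @ \oo --> (0 : R)) :
  exists kstar : nat, (0 < kstar)%N /\
  exists mu : R, 0 < mu < 1 /\
  forall a : nat -> 'M[R]_(N, M), (forall n, (0 < n)%N -> a n \in As) ->
    exists k : nat, (0 < k <= kstar)%N /\
    exists b : nat -> 'M[R]_(M, N), (forall i, (0 < i <= k)%N -> b i \in Bs) /\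
      nrm (prodAB a b k) <= mu.
Proof.
pose mu : R := 1 / 2.
have mu0 : 0 < mu by rewrite /mu; lra.
pose valid (a : nat -> 'M[R]_(N, M)) := forall n, (0 < n)%N -> a n \in As.
pose P k (a : nat -> 'M[R]_(N, M)) := forall j, (0 < j <= k)%N ->
  forall b : nat -> 'M[R]_(M, N), (forall i, (0 < i <= j)%N -> b i \in Bs) ->
  mu < nrm (prodAB a b j).
case: (pselect (forall k, exists a, valid a /\ P k a)) => [Hall|Hnot]; last first.
  have [k Hk] : exists k, ~ exists a, valid a /\ P k a.
    apply: contrapT => C; apply: Hnot => k; apply: contrapT => C2.
    by apply: C; exists k.
  exists k.+1; split => //; exists mu; split; first by rewrite /mu; lra.
  move=> a va; apply: contrapT => C; apply: Hk; exists a; split => //.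
  move=> j /andP[j0 jk] b hb; rewrite ltNge; apply/negP => hle; apply: C.
  exists j; split; first by rewrite j0 /=; exact: leqW.
  by exists b.
exfalso.
pose agree n (w a : nat -> 'M[R]_(N, M)) := forall i, (0 < i <= n)%N -> a i = w i.
pose Ext n w := forall m, exists a, valid a /\ agree n w a /\ P m a.
have Pmono : forall m m' a, (m' <= m)%N -> P m a -> P m' a.
  move=> m m' a mm Pm j /andP[j0 jm] b hb; apply: Pm => //.
  by rewrite j0 /=; exact: leq_trans jm mm.
have step : forall n w, Ext n w -> exists x, x \in As /\ Ext n.+1 (updf w n.+1 x).
  move=> n w E; apply: contrapT => C.
  have H1 : forall x, x \in As -> exists m, forall a, valid a ->
      agree n.+1 (updf w n.+1 x) a -> ~ P m a.
    move=> x xA; apply: contrapT => C2; apply: C; exists x; split => // m.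
    apply: contrapT => C3; apply: C2; exists m => a va ag Pm; apply: C3.
    by exists a.
  have [K HK] := @seq_bound _ _ _ H1.
  have [a [va [ag PK]]] := E K.
  have xA : a n.+1 \in As := va _ (ltn0Sn n).
  have [m [mK Hm]] := HK _ xA.
  apply: (Hm a va); last exact: Pmono PK.
  move=> i /andP[i0 iS]; case: (eqVneq i n.+1) => [->|ne]; first by rewrite updf_eq.
  rewrite updf_neq //.
  apply: ag; apply/andP; split => //; lia.
have [f Hf] : {f : nat * (nat -> 'M[R]_(N, M)) -> 'M[R]_(N, M) &
    forall p, Ext p.1 p.2 -> f p \in As /\ Ext p.1.+1 (updf p.2 p.1.+1 (f p))}.
  apply: (@choice _ _ (fun p x => Ext p.1 p.2 -> x \in As /\ Ext p.1.+1 (updf p.2 p.1.+1 x))).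
  move=> -[n w] /=.
  case: (pselect (Ext n w)) => [E|nE].
    by have [x hx] := step _ _ E; exists x.
  by exists 0 => /nE.
pose wseq := build 0 f.
have Ew : forall n, Ext n (wseq n).
  elim => [|n IH].
    move=> m; have [a [va Pm]] := Hall m; exists a; split => //; split => // i.
    by rewrite ltnNge andNb.
  by rewrite /wseq buildS; exact: (Hf (n, wseq n) IH).2.
have wstab : forall n i, (0 < i <= n)%N -> wseq n i = wseq i i.
  elim => [|n IH] i hi; first by lia.
  case: (eqVneq i n.+1) => [->//|ne].
  rewrite /wseq buildS updf_neq // -/wseq IH //; lia.
pose a i := wseq i i.
have va : valid a.
  move=> [|n] // _; rewrite /a /wseq buildS updf_eq -/wseq.
  exact: (Hf (n, wseq n) (Ew n)).1.
have [b [vb cv]] := hyp a va.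
move/cvgrPdist_lt: cv => /(_ mu mu0) [K _ HK].
have hlt : nrm (prodAB a b K.+1) < mu.
  have := HK K.+1 (leqnSn K); rewrite sub0r normrN.
  by apply: le_lt_trans; exact: ler_norm.
have [a' [va' [ag' Pn]]] := Ew K.+1 K.+1.
have := Pn K.+1 (leqnn _) b (fun i hi => vb i (proj1 (andP hi))).
rewrite (@prodAB_agree _ _ _ a' a b K.+1); first by rewrite ltNge (ltW hlt).
move=> i hi; rewrite ag' // /a wstab //.
Qed.
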